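(* Let $Z=(W,A,X,V,E,S)\sim\mathbb{P}$, where only $(W,A,X)$ is observed. Suppose that for all $j\in\{1,\dots,J\}$: (i) $\mathbb{E}[W_j\mid A,X]=\mathbb{E}[V_jE_jS\mid A,X]$; (ii) $V_j$, $E_j$ and $S$ are mutually independent conditionally on $(A,X)$; (iii) $E_j$ is independent of $(A,X)$; and (iv) $S$ is independent of $(A,X)$. Then for every $j$, the parameter $$\Psi^{(1)}_j(\mathbb{P}):=\log\left(\frac{\mathbb{E}[V_j\mid A=1]}{\mathbb{E}[V_j\mid A=0]}\right)$$ is identifiable.
   Context: $W\in\mathbb{R}_{\ge 0}^J$ are observed category levels, $A\in\{0,1\}$ is a binary exposure, $X\in\mathcal{X}\subseteq\mathbb{R}^p$ are covariates, $V\in\mathbb{R}_{\ge0}^J$ are latent true category levels, $E\in\mathbb{R}_{>0}^J$ are latent category-specific observabilities and $S\in\mathbb{R}_{>0}$ is a latent sample-specific scale; data are i.i.d. draws from $\mathbb{P}$. The parameter is assumed well defined (the conditional means are positive and finite). $\log$ is the natural logarithm. A parameter is identifiable (under a set of assumptions) if its value is uniquely determined by the distribution of the observed variables $(W,A,X)$, i.e. any two distributions satisfying the assumptions and inducing the same distribution of $(W,A,X)$ give the same parameter value. *)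

(* Defs.v *)
From HB Require Import structures.
From mathcomp Require Import all_boot all_order all_algebra.
From mathcomp Require Import all_classical all_reals all_analysis.
Set Implicit Arguments. Unset Strict Implicit. Unset Printing Implicit Defensive.
Import Order.TTheory GRing.Theory Num.Theory.
Local Open Scope classical_set_scope.
Local Open Scope ring_scope.

Section Defs.
Context (R : realType) (d : measure_display) (T : measurableType d)
  (P : probability T R) (p : nat).

Definition AX (A : T -> R) (X : T -> p.-tuple R) : T -> (R * p.-tuple R)%type :=
  fun t => (A t, X t).

(* E[Y | A, X] = E[Z | A, X] a.s., for nonnegative Y, Z (extended-real
   conditional expectations), written out through the defining property:
   equal integrals over every event of sigma(A, X). *)
Definition condexp_eq (A : T -> R) (X : T -> p.-tuple R) (Y Z : T -> R) : Prop :=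
  forall C : set (R * p.-tuple R)%type, measurable C ->
    (\int[P]_(t in AX A X @^-1` C) (Y t)%:E = \int[P]_(t in AX A X @^-1` C) (Z t)%:E)%E.

Definition condprob_version (A : T -> R) (X : T -> p.-tuple R) (F : set T)
    (g : (R * p.-tuple R)%type -> R) : Prop :=
  measurable_fun [set: (R * p.-tuple R)%type] g /\
  forall C : set (R * p.-tuple R)%type, measurable C ->
    P (F `&` AX A X @^-1` C) = (\int[P]_(t in AX A X @^-1` C) (g (AX A X t))%:E)%E.

Definition cond_mutual_indep (A : T -> R) (X : T -> p.-tuple R) (U1 U2 U3 : T -> R) : Prop :=
  forall B1 B2 B3 : set R, measurable B1 -> measurable B2 -> measurable B3 ->
    exists g1 g2 g3,
      condprob_version A X (U1 @^-1` B1) g1 /\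
      condprob_version A X (U2 @^-1` B2) g2 /\
      condprob_version A X (U3 @^-1` B3) g3 /\
      condprob_version A X (U1 @^-1` B1 `&` U2 @^-1` B2 `&` U3 @^-1` B3)
        (fun z => g1 z * g2 z * g3 z).

Definition indep_AX (A : T -> R) (X : T -> p.-tuple R) (U : T -> R) : Prop :=
  forall (B : set R) (C : set (R * p.-tuple R)%type), measurable B -> measurable C ->
    P (U @^-1` B `&` AX A X @^-1` C) = (P (U @^-1` B) * P (AX A X @^-1` C))%E.

Definition model_assumptions (J : nat) (W : T -> J.-tuple R) (A : T -> R)
    (X : T -> p.-tuple R) (V E : T -> J.-tuple R) (S : T -> R) : Prop :=
  [/\ measurable_fun [set: T] W, measurable_fun [set: T] A,
      measurable_fun [set: T] X & measurable_fun [set: T] V] /\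
  [/\ measurable_fun [set: T] E & measurable_fun [set: T] S] /\
  (forall t, A t = 0 \/ A t = 1) /\
  (forall t (j : 'I_J), [/\ 0 <= tnth (W t) j, 0 <= tnth (V t) j & 0 < tnth (E t) j]) /\
  (forall t, 0 < S t) /\
  forall j : 'I_J,
    [/\ condexp_eq A X (fun t => tnth (W t) j)
                       (fun t => tnth (V t) j * tnth (E t) j * S t),
        cond_mutual_indep A X (fun t => tnth (V t) j) (fun t => tnth (E t) j) S,
        indep_AX A X (fun t => tnth (E t) j) &
        indep_AX A X S].

Definition cond_mean_ext (A : T -> R) (Y : T -> R) (a : R) : \bar R :=
  (\int[P]_(t in A @^-1` [set a]) (Y t)%:E)%E.

Definition cond_mean (A : T -> R) (Y : T -> R) (a : R) : R :=
  fine (cond_mean_ext A Y a) / fine (P (A @^-1` [set a])).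

Definition well_defined (A : T -> R) (Wj Vj : T -> R) : Prop :=
  forall a : R, a = 0 \/ a = 1 ->
    [/\ (0 < P (A @^-1` [set a]))%E,
        (0 < cond_mean_ext A Vj a < +oo)%E &
        (0 < cond_mean_ext A Wj a < +oo)%E].

Definition Psi1 (A : T -> R) (Vj : T -> R) : R :=
  ln (cond_mean A Vj 1 / cond_mean A Vj 0).

End Defs.

Definition same_observed_law (R : realType) (J p : nat)
    (d1 : measure_display) (T1 : measurableType d1) (P1 : probability T1 R)
    (W1 : T1 -> J.-tuple R) (A1 : T1 -> R) (X1 : T1 -> p.-tuple R)
    (d2 : measure_display) (T2 : measurableType d2) (P2 : probability T2 R)
    (W2 : T2 -> J.-tuple R) (A2 : T2 -> R) (X2 : T2 -> p.-tuple R) : Prop :=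
  forall C : set ((J.-tuple R * R) * p.-tuple R)%type, measurable C ->
    P1 ((fun t => (W1 t, A1 t, X1 t)) @^-1` C) =
    P2 ((fun t => (W2 t, A2 t, X2 t)) @^-1` C).

(* Main.v *)
Require Import Defs.
From HB Require Import structures.
From mathcomp Require Import all_boot all_order all_algebra.
From mathcomp Require Import all_classical all_reals all_analysis.
From mathcomp Require Import measurable_realfun.
From mathcomp Require Import ring lra.
Set Implicit Arguments. Unset Strict Implicit. Unset Printing Implicit Defensive.
Import Order.TTheory GRing.Theory Num.Theory.
Local Open Scope classical_set_scope.
Local Open Scope ring_scope.

Section dens.
Local Open Scope ereal_scope.
Context d (T : measurableType d) (R : realType).

Definition dens (mu : {measure set T -> \bar R}) (g : T -> R)
  (mg : measurable_fun setT g) (g0 : forall x, (0 <= g x)%R) :=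
  fun A => \int[mu]_(x in A) (g x)%:E.

Section dens_measure.
Variables (mu : {measure set T -> \bar R}) (g : T -> R)
  (mg : measurable_fun setT g) (g0 : forall x, (0 <= g x)%R).

Let dens0 : dens mu mg g0 set0 = 0.
Proof. by rewrite /dens integral_set0. Qed.

Let dens_ge0 A : 0 <= dens mu mg g0 A.
Proof. by apply: integral_ge0 => x _; rewrite lee_fin. Qed.

Let dens_sigma : semi_sigma_additive (dens mu mg g0).
Proof.
apply: semi_sigma_additive_nng_induced.
- exact/measurable_EFinP.
- by move=> x; rewrite lee_fin.
Qed.

HB.instance Definition _ := isMeasure.Build _ _ _ (dens mu mg g0)
  dens0 dens_ge0 dens_sigma.
End dens_measure.

Import HBNNSimple.

Lemma integral_dens (mu : {measure set T -> \bar R}) (g : T -> R)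
  (mg : measurable_fun setT g) (g0 : forall x, (0 <= g x)%R)
  (f : T -> \bar R) (E : set T) : (forall x, 0 <= f x) ->
    measurable E -> measurable_fun E f ->
  \int[mu]_(x in E) (f x * (g x)%:E) = \int[dens mu mg g0]_(x in E) f x.
Proof.
move=> f0 mE mf; set nu := dens mu mg g0.
have mgE : measurable_fun E (EFin \o g) by exact/measurable_funTS/measurable_EFinP.
pose h := nnsfun_approx mE mf.
have -> : \int[nu]_(x in E) f x =
    lim (\int[nu]_(x in E) (EFin \o h n) x @[n --> \oo]).
  have fE x : E x -> f x = lim ((EFin \o h n) x @[n --> \oo]).
    by move=> Ex; apply/esym/cvg_lim => //; exact: cvg_nnsfun_approx.
  under eq_integral => x /[!inE] /fE -> //.
  apply: monotone_convergence => //.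
  - move=> n; apply/measurable_EFinP.
    by apply: (measurable_funS measurableT) => //; exact/measurable_funP.
  - by move=> n x Ex //=; rewrite lee_fin.
  - by move=> x Ex a b ab; rewrite lee_fin; exact/lefP/nd_nnsfun_approx.
have -> : \int[mu]_(x in E) (f x * (g x)%:E) =
    lim (\int[mu]_(x in E) ((EFin \o h n) x * (g x)%:E) @[n --> \oo]).
  have fg x : E x -> f x * (g x)%:E = lim (((EFin \o h n) x * (g x)%:E) @[n --> \oo]).
    by move=> Ex; apply/esym/cvg_lim => //; apply: cvgeZr;
      [by []|exact: cvg_nnsfun_approx].
  under eq_integral => x /[!inE] /fg -> //.
  apply: monotone_convergence => [//| | |].
  - move=> n; apply/emeasurable_funM => //; apply/measurable_funTS.
    exact/measurable_EFinP.
  - by move=> n x Ex /=; rewrite mule_ge0 ?lee_fin.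
  - by move=> x Ex a b ab/=; rewrite lee_wpmul2r ?lee_fin//; exact/lefP/nd_nnsfun_approx.
suff suf n : \int[mu]_(x in E) ((EFin \o h n) x * (g x)%:E) =
    \int[nu]_(x in E) (EFin \o h n) x.
  by under eq_fun do rewrite suf.
transitivity (\int[nu]_(x in E)
   (\sum_(y \in range (h n)) (y * \1_(h n @^-1` [set y]) x)%:E)); last first.
  by apply: eq_integral => t tE; rewrite /= fimfunE -fsumEFin.
have indich m r : measurable_fun E (fun x => (r * \1_(h m @^-1` [set r]) x)%:E).
  by apply: (measurable_comp measurableT) => //; exact: measurable_funM.
rewrite ge0_integral_fsum//; last by move=> m y Ey; exact: nnfun_muleindic_ge0.
transitivity (\int[mu]_(x in E) (\sum_(y \in range (h n))
    (y * \1_(h n @^-1` [set y]) x)%:E * (g x)%:E)).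
  under [RHS]eq_integral => x xE.
    rewrite -ge0_mule_fsuml => [|y]; last exact: nnfun_muleindic_ge0.
    rewrite fsumEFin // -(fimfunE _ x); over.
  by [].
rewrite ge0_integral_fsum//; last 2 first.
  - by move=> y; apply: emeasurable_funM => //.
  - by move=> m y Ey; rewrite mule_ge0 ?nnfun_muleindic_ge0 ?lee_fin.
apply: eq_fsbigr => r rhn.
under [RHS]eq_integral do rewrite EFinM.
rewrite integralZl_indic_nnsfun => //.
under eq_integral do rewrite EFinM -muleA.
rewrite ge0_integralZl//.
- under eq_integral do rewrite muleC.
  rewrite (eq_integral ((EFin \o g) \_ (h n @^-1` [set r]))); last first.
    by move=> x xE; rewrite epatch_indic.
  by rewrite integral_indic//= -integral_mkcondr /dens setIC.

- apply: emeasurable_funM => //; exact/measurable_EFinP.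
- by move=> t Et; rewrite mule_ge0 ?lee_fin.
- by move: rhn; rewrite inE => -[t _ <-]; rewrite lee_fin.
Qed.

End dens.

Section key.
Local Open Scope ereal_scope.
Context d (T : measurableType d) (R : realType).

Lemma integral_indicE (mu : {measure set T -> \bar R}) (D : set T) (f : T -> R) :
  \int[mu]_(x in D) (f x)%:E = \int[mu]_x ((f x)%:E * (\1_D x)%:E).
Proof.
rewrite integral_mkcond; apply: eq_integral => x _.
by rewrite epatch_indic.
Qed.

Lemma key (mu nu : {measure set T -> \bar R}) (f : T -> R)
  (mf : measurable_fun setT f) (f0 : forall x, (0 <= f x)%R)
  (D : set T) (mD : measurable D) (k : R) (k0 : (0 <= k)%R) :
  (forall B, measurable B -> mu (f @^-1` B `&` D) = k%:E * nu (f @^-1` B)) ->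
  \int[mu]_(x in D) (f x)%:E = k%:E * \int[nu]_x (f x)%:E.
Proof.
move=> H.
have mi : measurable_fun setT (\1_D : T -> R) by exact: measurable_indic.
have i0 : forall x, (0 <= (\1_D : T -> R) x)%R by move=> x; rewrite indicE.
rewrite integral_indicE integral_dens//; last first.
  by apply/measurable_EFinP.
pose I := (`[0%R, +oo[%classic : set R).
have mI : measurable I by exact: measurable_itv.
have fI : f @^-1` I = setT.
  by apply/seteqP; split => // x _; rewrite /I /= in_itv /= andbT f0.
have mfI : measurable_fun I (EFin : R -> \bar R) by [].
have I0 : {in I, forall y : R, 0 <= y%:E}.
  by move=> y; rewrite inE /I /= in_itv /= andbT lee_fin.
have := @ge0_integral_pushforward _ _ _ _ _ f mf (dens mu mi i0) I EFin mI mfI I0.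
rewrite fI => <-.
have := @ge0_integral_pushforward _ _ _ _ _ f mf nu I EFin mI mfI I0.
rewrite fI => <-.
pose kn := NngNum k0.
rewrite -(_ : kn%:num = k) //.
rewrite -ge0_integral_mscale//; last by move=> y Iy; apply: I0; rewrite inE.
apply: eq_measure_integral => A mA _.
change (dens mu mi i0 (f @^-1` A) = k%:E * nu (f @^-1` A)); rewrite /dens integral_indic //; last first.
  by rewrite -(setTI (f @^-1` A)); exact: mf.
by rewrite setIC H.
Qed.

End key.

Section aux.
Local Open Scope ereal_scope.
Context d (T : measurableType d) (R : realType).

Lemma pushforward_any d' (Y : measurableType d') (mu : {measure set T -> \bar R})
  (phi : T -> Y) (mphi : measurable_fun setT phi) (g : Y -> \bar R)
  (mg : measurable_fun setT g) (C : set Y) (mC : measurable C) :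
  \int[pushforward mu phi]_(y in C) g y = \int[mu]_(x in phi @^-1` C) (g \o phi) x.
Proof.
have h1 := @ge0_integral_pushforward _ _ _ _ _ phi mphi mu C (g^\+) mC
  (measurable_funTS (measurable_funepos mg)) (fun y _ => funepos_ge0 g y).
have h2 := @ge0_integral_pushforward _ _ _ _ _ phi mphi mu C (g^\-) mC
  (measurable_funTS (measurable_funeneg mg)) (fun y _ => funeneg_ge0 g y).
rewrite [LHS]integralE h1 h2 [RHS]integralE.
by rewrite -funepos_comp -funeneg_comp.
Qed.

Lemma finint (mu : {measure set T -> \bar R}) (D : set T) (f : T -> \bar R) :
  measurable D -> measurable_fun D f ->
  \int[mu]_(x in D) f x \is a fin_num -> mu.-integrable D f.
Proof.
move=> mD mf; rewrite integralE fin_numB => /andP[hp hn].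
apply/integrableP; split => //.
rewrite (_ : (fun x => `|f x|) = f^\+ \+ f^\-); last first.
  by rewrite -fune_abse.
rewrite ge0_integralD//; last 2 first.
- exact: measurable_funepos.
- exact: measurable_funeneg.
rewrite lte_add_pinfty// ltey_eq ?hp ?hn//.
Qed.

End aux.

Section factor.
Local Open Scope ereal_scope.
Context (R : realType) d (T : measurableType d) (P : probability T R) (p : nat).
Variables (A : T -> R) (X : T -> p.-tuple R).
Hypothesis mAX : measurable_fun setT (AX A X).

Lemma cpv_push F g : condprob_version P A X F g ->
  forall C, measurable C ->
  P (F `&` AX A X @^-1` C) = \int[pushforward P (AX A X)]_(y in C) (g y)%:E.
Proof.
move=> [mg h] C mC; rewrite (h C mC).
have mEg : measurable_fun setT (EFin \o g) by exact/measurable_EFinP.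
by have := @pushforward_any _ _ _ _ _ P _ mAX (EFin \o g) mEg C mC; move=> ->.
Qed.

Lemma cpv_int F g : measurable F -> condprob_version P A X F g ->
  (pushforward P (AX A X)).-integrable setT (EFin \o g).
Proof.
move=> mF hg; have [mg _] := hg.
apply: finint => //; first exact/measurable_EFinP.
rewrite -(cpv_push hg)// fin_num_measure//; apply: measurableI => //.
by rewrite -(setTI (_ @^-1` _)); exact: mAX.
Qed.

Lemma factor (U1 U2 U3 : T -> R) :
  measurable_fun setT U1 -> measurable_fun setT U2 -> measurable_fun setT U3 ->
  cond_mutual_indep P A X U1 U2 U3 -> indep_AX P A X U2 -> indep_AX P A X U3 ->
  forall B1 B2 B3 C, measurable B1 -> measurable B2 -> measurable B3 -> measurable C ->
  P (U1 @^-1` B1 `&` U2 @^-1` B2 `&` U3 @^-1` B3 `&` AX A X @^-1` C) =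
  (fine (P (U2 @^-1` B2)) * fine (P (U3 @^-1` B3)))%:E *
    P (U1 @^-1` B1 `&` AX A X @^-1` C).
Proof.
move=> mU1 mU2 mU3 cmi i2 i3 B1 B2 B3 C mB1 mB2 mB3 mC.
have mpre (U : T -> R) B : measurable_fun setT U -> measurable B ->
    measurable (U @^-1` B).
  by move=> mU mB; rewrite -(setTI (U @^-1` B)); exact: mU.
have [g1 [g2 [g3 [c1 [c2 [c3 c123]]]]]] := cmi B1 B2 B3 mB1 mB2 mB3.
set k2 := fine (P (U2 @^-1` B2)).
set k3 := fine (P (U3 @^-1` B3)).
have h2 : forall E, E `<=` setT -> measurable E ->
    \int[pushforward P (AX A X)]_(x in E) (EFin \o g2) x =
    \int[pushforward P (AX A X)]_(x in E) (cst k2%:E) x.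
  move=> E _ mE; rewrite integral_cst//.
  rewrite /k2 fineK; last exact: fin_num_measure (mpre _ _ mU2 mB2).
  by rewrite -i2// (cpv_push c2 mE).
have e2 := @integral_ae_eq _ _ _ (pushforward P (AX A X)) setT measurableT
    (cst k2%:E) (EFin \o g2) (cpv_int (mpre _ _ mU2 mB2) c2) (measurable_cst _) h2.
have h3 : forall E, E `<=` setT -> measurable E ->
    \int[pushforward P (AX A X)]_(x in E) (EFin \o g3) x =
    \int[pushforward P (AX A X)]_(x in E) (cst k3%:E) x.
  move=> E _ mE; rewrite integral_cst//.
  rewrite /k3 fineK; last exact: fin_num_measure (mpre _ _ mU3 mB3).
  by rewrite -i3// (cpv_push c3 mE).
have e3 := @integral_ae_eq _ _ _ (pushforward P (AX A X)) setT measurableT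
    (cst k3%:E) (EFin \o g3) (cpv_int (mpre _ _ mU3 mB3) c3) (measurable_cst _) h3.
have int1 := cpv_int (mpre _ _ mU1 mB1) c1.
rewrite (cpv_push c123 mC) (cpv_push c1 mC).
have [mg1 _] := c1.
have [mg123 _] := c123.
rewrite -integralZl//; last exact: (integrableS measurableT mC (@subsetT _ C) int1).
apply: ae_eq_integral => //.
- exact/measurable_funTS/measurable_EFinP.
- apply: emeasurable_funM => //; exact/measurable_funTS/measurable_EFinP.
apply: (ae_eq_subset (@subsetT _ C)).
apply: (filterS2 _ _ (e2 mAX) (e3 mAX)) => y y2 y3 _.
have := y2 I; have := y3 I; rewrite /= => -[->] [->].
by rewrite -EFinM; congr (_%:E); rewrite /k2 /k3; ring.
Qed.

End factor.

Section chain.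
Local Open Scope ereal_scope.
Context (R : realType) d (T : measurableType d) (P : probability T R).
Variables (v e s : T -> R) (G : set T).
Hypotheses (mv : measurable_fun setT v) (me : measurable_fun setT e)
  (ms : measurable_fun setT s) (mG : measurable G).
Hypotheses (v0 : forall x, (0 <= v x)%R) (e0 : forall x, (0 <= e x)%R)
  (s0 : forall x, (0 <= s x)%R).
Hypothesis hF : forall B1 B2 B3, measurable B1 -> measurable B2 -> measurable B3 ->
  P (v @^-1` B1 `&` e @^-1` B2 `&` s @^-1` B3 `&` G) =
  (fine (P (e @^-1` B2)) * fine (P (s @^-1` B3)))%:E * P (v @^-1` B1 `&` G).
Hypothesis hF0 : forall B1 B2 B3, measurable B1 -> measurable B2 -> measurable B3 ->
  P (v @^-1` B1 `&` e @^-1` B2 `&` s @^-1` B3 `&` setT) =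
  (fine (P (e @^-1` B2)) * fine (P (s @^-1` B3)))%:E * P (v @^-1` B1 `&` setT).
Hypothesis hv : \int[P]_(x in G) (v x)%:E \is a fin_num.

Let mpre (U : T -> R) B : measurable_fun setT U -> measurable B ->
    measurable (U @^-1` B).
Proof. by move=> mU mB; rewrite -(setTI (U @^-1` B)); exact: mU. Qed.

Let kE (U : T -> R) B : measurable_fun setT U -> measurable B ->
  (fine (P (U @^-1` B)))%:E = P (U @^-1` B).
Proof. by move=> mU mB; rewrite fineK// fin_num_measure//; exact: mpre. Qed.

Let k0 (U : T -> R) B : (0 <= fine (P (U @^-1` B)))%R.
Proof. by rewrite fine_ge0// measure_ge0. Qed.

Let g1 := fun x => (v x * \1_G x)%R.
Let mg1 : measurable_fun setT g1.
Proof. by apply: measurable_funM => //; exact: measurable_indic. Qed.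
Let g10 x : (0 <= g1 x)%R.
Proof. by rewrite /g1 mulr_ge0// indicE. Qed.

Let rho1 := dens P mg1 g10.

Let dens_indic (mi : measurable_fun setT (\1_G : T -> R)) i0 S : measurable S ->
  dens P mi i0 S = P (G `&` S).
Proof. by move=> mS; rewrite /dens integral_indic// setIC. Qed.

Lemma chain_main :
  \int[P]_(x in G) (v x * e x * s x)%:E =
  \int[P]_(x in G) (v x)%:E * \int[P]_x (e x * s x)%:E.
Proof.
have mi : measurable_fun setT (\1_G : T -> R) by exact: measurable_indic.
have i0 : forall x, (0 <= (\1_G : T -> R) x)%R by move=> x; rewrite indicE.
have r1E : rho1 setT = \int[P]_(x in G) (v x)%:E.
  rewrite /rho1 /dens [RHS]integral_indicE; apply: eq_integral => x _.
  by rewrite /g1 EFinM.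
set r1 := fine (\int[P]_(x in G) (v x)%:E).
have r1E' : r1%:E = \int[P]_(x in G) (v x)%:E by rewrite /r1 fineK.
have r10 : (0 <= r1)%R by rewrite /r1 fine_ge0// integral_ge0// => x _; rewrite lee_fin.
have st1 : forall B2 B3, measurable B2 -> measurable B3 ->
    rho1 (e @^-1` B2 `&` s @^-1` B3) =
    (fine (P (e @^-1` B2)) * fine (P (s @^-1` B3)))%:E * r1%:E.
  move=> B2 B3 mB2 mB3.
  have mD : measurable (e @^-1` B2 `&` s @^-1` B3 `&` G).
    by apply: measurableI => //; apply: measurableI; exact: mpre.
  have -> : rho1 (e @^-1` B2 `&` s @^-1` B3) =
      \int[P]_(x in e @^-1` B2 `&` s @^-1` B3 `&` G) (v x)%:E.
    rewrite /rho1 /dens [RHS]integral_mkcondr; apply: eq_integral => x _.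
    by rewrite epatch_indic /= /g1 EFinM.
  rewrite (@key _ _ _ P (dens P mi i0) _ mv v0 _ mD (fine (P (e @^-1` B2)) * fine (P (s @^-1` B3)))); last 2 first.
  - exact: mulr_ge0.
  - move=> B mB.
    transitivity ((fine (P (e @^-1` B2)) * fine (P (s @^-1` B3)))%:E * P (G `&` v @^-1` B)); last first.
      by rewrite -(dens_indic mi i0 (mpre mv mB)).
    by rewrite [G `&` _]setIC !setIA; apply: hF.
  congr (_ * _); rewrite r1E' -r1E /rho1 /dens.
  by rewrite -integral_dens//; exact/measurable_EFinP.
set Ie := \int[P]_x (e x)%:E.
pose rho2 := dens rho1 me e0.
have st2 : forall B3, measurable B3 ->
    rho2 (s @^-1` B3) = (fine (P (s @^-1` B3)) * r1)%:E * Ie.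
  move=> B3 mB3.
  rewrite /rho2 /dens (@key _ _ _ rho1 P _ me e0 _ (mpre ms mB3)
    (fine (P (s @^-1` B3)) * r1)); last 2 first.
  - exact: mulr_ge0.
  - move=> B mB; apply: (eq_trans (st1 B B3 mB mB3)).
    by rewrite -[X in _ = _ * X](kE me mB) -EFinM; congr EFin; ring.
  by [].
pose nu := dens P me e0.
have stN : forall B, measurable B ->
    nu (s @^-1` B) = (fine (P (s @^-1` B)))%:E * Ie.
  move=> B mB.
  rewrite /nu /dens (@key _ _ _ P P _ me e0 _ (mpre ms mB)
    (fine (P (s @^-1` B)))) //.
  move=> B' mB'.
  have := hF0 measurableT mB' mB.
  rewrite preimage_setT setTI !setIT probability_setT mule1 => h.
  apply: (eq_trans h).
  by rewrite -[X in _ = _ * X](kE me mB') -EFinM mulrC.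
have st3 := @key _ _ _ rho2 nu _ ms s0 _ measurableT r1 r10.
have {}st3 : \int[rho2]_(x in setT) (s x)%:E = r1%:E * \int[nu]_x (s x)%:E.
  apply: st3 => B mB; rewrite setIT; apply: (eq_trans (st2 B mB)).
  transitivity (r1%:E * ((fine (P (s @^-1` B)))%:E * Ie)); last first.
    by congr (_ * _); symmetry; exact: stN.
  by rewrite EFinM muleA; congr (_ * _); exact: muleC.
have L1 : \int[rho2]_(x in setT) (s x)%:E =
    \int[P]_(x in setT) ((s x)%:E * (e x)%:E * (g1 x)%:E).
  rewrite /rho2 -integral_dens//; try (by move=> x; rewrite lee_fin);
    try (by exact/measurable_EFinP).
  rewrite /rho1 -integral_dens//; try (by move=> x; rewrite mule_ge0// lee_fin);
    try (by apply: emeasurable_funM; exact/measurable_EFinP).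
have L2 : \int[nu]_x (s x)%:E = \int[P]_x ((s x)%:E * (e x)%:E).
  rewrite /nu -integral_dens//; try (by move=> x; rewrite lee_fin);
    try (by exact/measurable_EFinP).
rewrite -r1E' integral_indicE.
transitivity (\int[P]_(x in setT) ((s x)%:E * (e x)%:E * (g1 x)%:E)).
  by apply: eq_integral => x _; rewrite -!EFinM /g1; congr EFin; ring.
rewrite -L1 st3 L2; congr (_ * _).
by apply: eq_integral => x _; rewrite -EFinM mulrC.
Qed.

End chain.

Section model.
Local Open Scope ereal_scope.

Lemma model_key (R : realType) d (T : measurableType d) (P : probability T R)
  (J p : nat) (W : T -> J.-tuple R) (A : T -> R) (X : T -> p.-tuple R)
  (V E : T -> J.-tuple R) (S : T -> R) (j : 'I_J) :
  model_assumptions P W A X V E S ->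
  forall a, \int[P]_(t in A @^-1` [set a]) (tnth (V t) j)%:E \is a fin_num ->
  \int[P]_(t in A @^-1` [set a]) (tnth (W t) j)%:E =
  \int[P]_(t in A @^-1` [set a]) (tnth (V t) j)%:E *
  \int[P]_t (tnth (E t) j * S t)%:E.
Proof.
move=> [[mW mA mX mV] [[mE mS] [Aval [nonneg [Spos hj]]]]] a hv.
have [hce hcmi hiE hiS] := hj j.
have mv : measurable_fun setT (fun t => tnth (V t) j).
  by move/measurable_fun_tnthP : mV => /(_ j).
have me : measurable_fun setT (fun t => tnth (E t) j).
  by move/measurable_fun_tnthP : mE => /(_ j).
have mAX : measurable_fun setT (AX A X) by exact: measurable_fun_pair.
have mC : measurable ([set a] `*` [set: p.-tuple R]) by exact: measurableX.
have GE : AX A X @^-1` ([set a] `*` [set: p.-tuple R]) = A @^-1` [set a].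
  by apply/seteqP; split => t /=; rewrite /AX /= => -[].
have v0 t : (0 <= tnth (V t) j)%R by have [] := nonneg t j.
have e0 t : (0 <= tnth (E t) j)%R by have [_ _ /ltW] := nonneg t j.
have s0 t : (0 <= S t)%R by exact/ltW/Spos.
have mG : measurable (AX A X @^-1` ([set a] `*` [set: p.-tuple R])).
  by rewrite -(setTI (_ @^-1` _)); exact: mAX.
rewrite -GE; rewrite -GE in hv; apply: (eq_trans (hce _ mC)).
apply: chain_main => //.
- move=> B1 B2 B3 mB1 mB2 mB3.
  exact: (factor mAX mv me mS hcmi hiE hiS mB1 mB2 mB3 mC).
- move=> B1 B2 B3 mB1 mB2 mB3.
  have := factor mAX mv me mS hcmi hiE hiS mB1 mB2 mB3 measurableT.
  by rewrite !preimage_setT.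
Qed.

Lemma model_psi (R : realType) d (T : measurableType d) (P : probability T R)
  (J p : nat) (W : T -> J.-tuple R) (A : T -> R) (X : T -> p.-tuple R)
  (V E : T -> J.-tuple R) (S : T -> R) (j : 'I_J) :
  model_assumptions P W A X V E S ->
  well_defined P A (fun t => tnth (W t) j) (fun t => tnth (V t) j) ->
  Psi1 P A (fun t => tnth (V t) j) =
  ln (cond_mean P A (fun t => tnth (W t) j) 1 / cond_mean P A (fun t => tnth (W t) j) 0)%R.
Proof.
move=> hm wd.
set K := \int[P]_t (tnth (E t) j * S t)%:E.
have K0 : 0 <= K.
  apply: integral_ge0 => t _; rewrite lee_fin.
  have [_ _ e0] := hm.2.2.2.1 t j; have s0 := hm.2.2.2.2.1 t.
  by rewrite mulr_ge0// ltW.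
have hk a : a = 0%R \/ a = 1%R ->
    cond_mean_ext P A (fun t => tnth (W t) j) a =
    cond_mean_ext P A (fun t => tnth (V t) j) a * K.
  move=> ha; have [_ /andP[vl vu] _] := wd a ha.
  apply: (model_key hm).
  by rewrite ge0_fin_numE// ltW.
have [p1 /andP[v1l v1u] /andP[w1l w1u]] := wd 1%R (or_intror erefl).
have Kfin : K \is a fin_num.
  rewrite ge0_fin_numE// ltNge leye_eq; apply/negP => /eqP Koo.
  by move: w1u; rewrite (hk 1%R (or_intror erefl)) Koo gt0_muley// ltxx.
set k := fine K.
have Kk : K = k%:E by rewrite /k fineK.
have k0 : k != 0%R.
  apply/negP => /eqP k0.
  by move: w1l; rewrite (hk 1%R (or_intror erefl)) Kk k0 mule0 ltxx.
have cm a : a = 0%R \/ a = 1%R ->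
    cond_mean P A (fun t => tnth (W t) j) a =
    (cond_mean P A (fun t => tnth (V t) j) a * k)%R.
  move=> ha; have [_ /andP[vl vu] _] := wd a ha.
  rewrite /cond_mean (hk a ha) Kk fineM//; last by rewrite ge0_fin_numE// ltW.
  by rewrite mulrAC.
rewrite /Psi1 (cm 1%R (or_intror erefl)) (cm 0%R (or_introl erefl)).
by congr ln; rewrite [in RHS]invfM [in RHS]mulrACA mulfV// mulr1.
Qed.

End model.

Section obs.
Local Open Scope ereal_scope.
Context (R : realType) (J p : nat) (j : 'I_J) (a : R).
Let Z := ((J.-tuple R * R) * p.-tuple R)%type.
Let D := [set z : Z | z.1.2 = a /\ (0 <= tnth z.1.1 j)%R].

Let mf2 : measurable_fun setT (fun z : Z => tnth z.1.1 j).
Proof.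
exact: (@measurableT_comp _ _ _ _ _ _ (fun w : J.-tuple R => tnth w j) _
    (fun z : Z => z.1.1) (measurable_tnth j) (@measurableT_comp _ _ _ _ _ _ fst _ fst
    measurable_fst measurable_fst)).
Qed.

Let mD : measurable D.
Proof.
have -> : D = (fun z : Z => z.1.2) @^-1` [set a] `&`
    (fun z : Z => tnth z.1.1 j) @^-1` `[0%R, +oo[%classic.
  by apply/seteqP; split => z /=; rewrite in_itv /= andbT.
have mf1 : measurable_fun setT (fun z : Z => z.1.2).
  exact: (@measurableT_comp _ _ _ _ _ _ snd _ fst).

apply: measurableI.
- by rewrite -(setTI (_ @^-1` _)); exact: mf1.
- rewrite -(setTI (_ @^-1` _)); apply: mf2 => //; exact: measurable_itv.
Qed.

Let mf : measurable_fun D (fun z : Z => (tnth z.1.1 j)%:E).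
Proof.
apply: (measurable_funS measurableT) => //; exact/measurable_EFinP.
Qed.

Let f0 : {in D, forall z : Z, 0 <= (tnth z.1.1 j)%:E}.
Proof. by move=> z; rewrite inE => -[_ h]; rewrite lee_fin. Qed.

Let obs_ext d (T : measurableType d) (P : probability T R)
  (W : T -> J.-tuple R) (A : T -> R) (X : T -> p.-tuple R)
  (mW : measurable_fun setT W) (mA : measurable_fun setT A)
  (mX : measurable_fun setT X) (W0 : forall t, (0 <= tnth (W t) j)%R) :
  cond_mean_ext P A (fun t => tnth (W t) j) a =
  \int[pushforward P (fun t => (W t, A t, X t))]_(z in D) (tnth z.1.1 j)%:E.
Proof.
have mphi : measurable_fun setT (fun t => (W t, A t, X t)).
  by apply: measurable_fun_pair => //; exact: measurable_fun_pair.
rewrite (@ge0_integral_pushforward _ _ _ _ _ _ mphi)//.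
have -> : (fun t => (W t, A t, X t)) @^-1` D = A @^-1` [set a].
  by apply/seteqP; split => t; rewrite /D /=; [case|split].
by [].
Qed.

Lemma obs_mean d1 (T1 : measurableType d1) (P1 : probability T1 R)
  (W1 : T1 -> J.-tuple R) (A1 : T1 -> R) (X1 : T1 -> p.-tuple R)
  d2 (T2 : measurableType d2) (P2 : probability T2 R)
  (W2 : T2 -> J.-tuple R) (A2 : T2 -> R) (X2 : T2 -> p.-tuple R) :
  measurable_fun setT W1 -> measurable_fun setT A1 -> measurable_fun setT X1 ->
  measurable_fun setT W2 -> measurable_fun setT A2 -> measurable_fun setT X2 ->
  (forall t, (0 <= tnth (W1 t) j)%R) -> (forall t, (0 <= tnth (W2 t) j)%R) ->
  same_observed_law P1 W1 A1 X1 P2 W2 A2 X2 ->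
  cond_mean P1 A1 (fun t => tnth (W1 t) j) a =
  cond_mean P2 A2 (fun t => tnth (W2 t) j) a.
Proof.
move=> mW1 mA1 mX1 mW2 mA2 mX2 W10 W20 hs.
have mphi1 : measurable_fun setT (fun t => (W1 t, A1 t, X1 t)).
  by apply: measurable_fun_pair => //; exact: measurable_fun_pair.
have mphi2 : measurable_fun setT (fun t => (W2 t, A2 t, X2 t)).
  by apply: measurable_fun_pair => //; exact: measurable_fun_pair.
rewrite /cond_mean (obs_ext P1 mW1 mA1 mX1 W10) (obs_ext P2 mW2 mA2 mX2 W20).
have -> : \int[pushforward P1 (fun t => (W1 t, A1 t, X1 t))]_(z in D) (tnth z.1.1 j)%:E =
    \int[pushforward P2 (fun t => (W2 t, A2 t, X2 t))]_(z in D) (tnth z.1.1 j)%:E.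
  apply: eq_measure_integral => B mB _.
  exact: hs.
congr (_ / fine _)%R.
have mDa : measurable [set z : Z | z.1.2 = a].
  have -> : [set z : Z | z.1.2 = a] = (fun z : Z => z.1.2) @^-1` [set a] by [].
  rewrite -(setTI (_ @^-1` _)).
  exact: (@measurableT_comp _ _ _ _ _ _ snd _ fst).
exact: (hs _ mDa).
Qed.

End obs.

Close Scope classical_set_scope.
Close Scope ring_scope.

Theorem mainTheorem1 (R : realType) (J p : nat)
  (d1 : measure_display) (T1 : measurableType d1) (P1 : probability T1 R)
  (W1 : T1 -> J.-tuple R) (A1 : T1 -> R) (X1 : T1 -> p.-tuple R)
  (V1 E1 : T1 -> J.-tuple R) (S1 : T1 -> R)
  (d2 : measure_display) (T2 : measurableType d2) (P2 : probability T2 R)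
  (W2 : T2 -> J.-tuple R) (A2 : T2 -> R) (X2 : T2 -> p.-tuple R)
  (V2 E2 : T2 -> J.-tuple R) (S2 : T2 -> R) :
  model_assumptions P1 W1 A1 X1 V1 E1 S1 ->
  model_assumptions P2 W2 A2 X2 V2 E2 S2 ->
  same_observed_law P1 W1 A1 X1 P2 W2 A2 X2 ->
  forall j : 'I_J,
    well_defined P1 A1 (fun t => tnth (W1 t) j) (fun t => tnth (V1 t) j) ->
    well_defined P2 A2 (fun t => tnth (W2 t) j) (fun t => tnth (V2 t) j) ->
    Psi1 P1 A1 (fun t => tnth (V1 t) j) = Psi1 P2 A2 (fun t => tnth (V2 t) j).
Proof.
move=> h1 h2 hs j wd1 wd2.
rewrite (model_psi h1 wd1) (model_psi h2 wd2).
have [[mW1 mA1 mX1 _] [_ [_ [n1 _]]]] := h1.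
have [[mW2 mA2 mX2 _] [_ [_ [n2 _]]]] := h2.
have W10 t : (0 <= tnth (W1 t) j)%R by have [] := n1 t j.
have W20 t : (0 <= tnth (W2 t) j)%R by have [] := n2 t j.
by rewrite (obs_mean 1%R mW1 mA1 mX1 mW2 mA2 mX2 W10 W20 hs) (obs_mean 0%R mW1 mA1 mX1 mW2 mA2 mX2 W10 W20 hs).
Qed.
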